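(* Let $s$ be a positive integer, $\alpha\in\mathbb{R}$, $\omega(t)=\alpha+t^s$, $0<R<1$, $m_0>0$, and let $$\varphi:\ \xi'=e^{i\omega(\xi\eta)}\xi\,(1+p(\xi,\eta)),\quad \eta'=e^{-i\omega(\xi\eta)}\eta\,(1+p(\xi,\eta))^{-1},$$ where $p$ is a power series starting with terms of order at least $2s+1$, converging on $\Delta_R$, with $\|p\|_R\le m_0$. For a positive integer $n$ put $$d_0=\min\Big\{\frac{R^{2s+1}}{2^{6s+6}m_0},\ \Big(\frac{1}{2n}\Big)^{1/(2s)},\ \frac{R}{16}\Big\}.$$ Then for every $1\le k\le n$ the iterate $\varphi^k$ is defined on $\Delta_{d_0}$ and maps $\Delta_{d_0}$ into $\Delta_{4d_0}$.
   Context: $\Delta_r=\{(\xi,\eta)\in\mathbb{C}^2:|\xi|<r,|\eta|<r\}$ and $\|p\|_R=\max_{|\xi|,|\eta|\le R}|p(\xi,\eta)|$. *)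

(* Defs.v *)
From Stdlib Require Import Reals.
From Coquelicot Require Import Coquelicot.
Open Scope R_scope.

Fixpoint Cpow (z : C) (n : nat) : C :=
  match n with O => 1%C | S m => (z * Cpow z m)%C end.

Definition cexp (z : C) : C :=
  (exp (Re z) * cos (Im z), exp (Re z) * sin (Im z)).

Definition in_bidisc (r : R) (z : C * C) : Prop :=
  Cmod (fst z) < r /\ Cmod (snd z) < r.

(* triangular partial sum  sum_{i+j <= N} c i j xi^i eta^j *)
Fixpoint psum2 (c : nat -> nat -> C) (N : nat) (x y : C) : C :=
  let row := fix row (i : nat) : C :=
      match i with
      | O => (c O N * Cpow y N)%C
      | S i' => (c i (N - i)%nat * Cpow x i * Cpow y (N - i) + row i')%C
      end in
  match N with
  | O => (c O O)%C
  | S N' => (psum2 c N' x y + row N)%C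
  end.

(* nonnegative partial sum  sum_{i+j <= N} |c i j| |xi|^i |eta|^j *)
Fixpoint abssum2 (c : nat -> nat -> C) (N : nat) (x y : C) : R :=
  let row := fix row (i : nat) : R :=
      match i with
      | O => Cmod (c O N) * Cmod y ^ N
      | S i' => Cmod (c i (N - i)%nat) * Cmod x ^ i * Cmod y ^ (N - i) + row i'
      end in
  match N with
  | O => Cmod (c O O)
  | S N' => abssum2 c N' x y + row N
  end.

(* p is (on Delta_r) the sum of the double power series with coefficients c,
   which converges (absolutely) at every point of Delta_r *)
Definition is_power_series_on (r : R) (c : nat -> nat -> C) (p : C * C -> C) : Prop :=
  forall z : C * C, in_bidisc r z ->
    (exists M : R, forall N : nat, abssum2 c N (fst z) (snd z) <= M) /\
    filterlim (fun N => psum2 c N (fst z) (snd z)) eventually (locally (p z)).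

Definition order_at_least (ord : nat) (c : nat -> nat -> C) : Prop :=
  forall i j : nat, (i + j < ord)%nat -> c i j = 0%C.

Definition omega (alpha : R) (s : nat) (t : C) : C := (RtoC alpha + Cpow t s)%C.

Definition phi (alpha : R) (s : nat) (p : C * C -> C) (z : C * C) : C * C :=
  let xi := fst z in let eta := snd z in
  let w := omega alpha s (xi * eta)%C in
  ((cexp (Ci * w) * xi * (1 + p z))%C,
   (cexp (- (Ci * w)) * eta * / (1 + p z))%C).

(* phi is defined at z: z lies in Delta_R (where p converges) and 1 + p z <> 0 *)
Definition phi_defined_at (Rad : R) (p : C * C -> C) (z : C * C) : Prop :=
  in_bidisc Rad z /\ (1 + p z)%C <> 0%C.

Definition d0 (s : nat) (Rad m0 : R) (n : nat) : R :=
  Rmin (Rmin (Rad ^ (2 * s + 1) / (2 ^ (6 * s + 6) * m0))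
             (Rpower (/ (2 * INR n)) (/ (2 * INR s))))
       (Rad / 16).

(* Main.v *)
From Pilot Require Import Defs.
From Stdlib Require Import Reals Lra Lia.
From Coquelicot Require Import Coquelicot.
Import Pilot.Defs.
Open Scope R_scope.

Fixpoint csum (f : nat -> C) (n : nat) : C :=
  match n with O => 0%C | S m => (csum f m + f m)%C end.
Fixpoint rsum (f : nat -> R) (n : nat) : R :=
  match n with O => 0 | S m => rsum f m + f m end.

Lemma Cpow_add z a b : Cpow z (a + b) = (Cpow z a * Cpow z b)%C.
Proof. induction a; simpl. ring. rewrite IHa. ring. Qed.
Lemma Cpow_mul_l x y n : Cpow (x * y) n = (Cpow x n * Cpow y n)%C.
Proof. induction n; simpl. ring. rewrite IHn. ring. Qed.
Lemma Cpow_mult z a b : Cpow z (a * b) = Cpow (Cpow z a) b.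
Proof. induction b; simpl. rewrite Nat.mul_0_r. reflexivity.
  rewrite Nat.mul_succ_r, Cpow_add, IHb. simpl. ring. Qed.
Lemma Cmod_Cpow z n : Cmod (Cpow z n) = Cmod z ^ n.
Proof. induction n; simpl. apply Cmod_1. rewrite Cmod_mult, IHn. ring. Qed.
Lemma Cpow_RtoC r n : Cpow (RtoC r) n = RtoC (r ^ n).
Proof. induction n; simpl. reflexivity. rewrite IHn. apply injective_projections; simpl; ring. Qed.

Lemma csum_ext f g n : (forall k, (k < n)%nat -> f k = g k) -> csum f n = csum g n.
Proof. induction n; intros H; simpl. reflexivity. rewrite IHn, H. reflexivity. lia. intros; apply H; lia. Qed.
Lemma csum_plus f g n : csum (fun k => f k + g k)%C n = (csum f n + csum g n)%C.
Proof. induction n; simpl. ring. rewrite IHn. ring. Qed.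
Lemma csum_scal a f n : csum (fun k => a * f k)%C n = (a * csum f n)%C.
Proof. induction n; simpl. ring. rewrite IHn. ring. Qed.
Lemma csum_exch F n m : csum (fun u => csum (fun v => F u v) m) n = csum (fun v => csum (fun u => F u v) n) m.
Proof. induction n; simpl.
  - induction m; simpl. reflexivity. rewrite <- IHm. ring.
  - rewrite IHn. rewrite <- csum_plus. reflexivity. Qed.
Lemma Cmod_csum f n : Cmod (csum f n) <= rsum (fun k => Cmod (f k)) n.
Proof. induction n; simpl. rewrite Cmod_0; lra.
  eapply Rle_trans. apply Cmod_triangle. lra. Qed.
Lemma rsum_le f g n : (forall k, (k < n)%nat -> f k <= g k) -> rsum f n <= rsum g n.
Proof. induction n; intros H; simpl. lra. assert (f n <= g n) by (apply H; lia).
  assert (rsum f n <= rsum g n) by (apply IHn; intros; apply H; lia). lra. Qed.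
Lemma rsum_const a n : rsum (fun _ => a) n = INR n * a.
Proof. induction n; simpl rsum. simpl; ring. rewrite IHn, S_INR. ring. Qed.

Lemma geo_tail q K L : 0 <= q < 1 ->
  rsum (fun N => if (K <=? N)%nat then q ^ N else 0) L <= q ^ K / (1 - q).
Proof.
  intros Hq.
  assert (H : forall L, rsum (fun N => if (K <=? N)%nat then q ^ N else 0) L
     + (if (K <=? L)%nat then q ^ L else q ^ K) / (1 - q) = q ^ K / (1 - q)).
  { induction L0; simpl rsum.
    - destruct (K <=? 0)%nat eqn:E. apply Nat.leb_le in E. replace K with 0%nat by lia. lra. lra.
    - destruct (K <=? L0)%nat eqn:E1; destruct (K <=? S L0)%nat eqn:E2.
      + rewrite <- IHL0. simpl. field. lra.
      + apply Nat.leb_le in E1; apply Nat.leb_nle in E2; lia.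
      + apply Nat.leb_nle in E1; apply Nat.leb_le in E2. replace K with (S L0) in * by lia.
        rewrite <- IHL0. lra.
      + lra. }
  specialize (H L). assert (0 <= (if (K <=? L)%nat then q ^ L else q ^ K) / (1 - q)).
  { apply Rdiv_le_0_compat. destruct (K <=? L)%nat; apply pow_le; lra. lra. }
  lra.
Qed.

Fixpoint rowf (c : nat -> nat -> C) (N : nat) (x y : C) (i : nat) : C :=
  match i with
  | O => (c O N * Cpow y N)%C
  | S i' => (c i (N - i)%nat * Cpow x i * Cpow y (N - i) + rowf c N x y i')%C
  end.
Fixpoint absrow (c : nat -> nat -> C) (N : nat) (x y : C) (i : nat) : R :=
  match i with
  | O => Cmod (c O N) * Cmod y ^ N
  | S i' => Cmod (c i (N - i)%nat) * Cmod x ^ i * Cmod y ^ (N - i) + absrow c N x y i'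
  end.
Definition hp c N x y := rowf c N x y N.

Lemma psum2_S c N x y : psum2 c (S N) x y = (psum2 c N x y + hp c (S N) x y)%C.
Proof. unfold psum2 at 1; fold psum2. unfold hp. f_equal.
  simpl rowf. f_equal.
  match goal with |- ?F N = _ => assert (H : forall i, F i = rowf c (S N) x y i) end.
  { induction i. reflexivity. simpl. rewrite <- IHi. reflexivity. }
  apply H. Qed.
Lemma abssum2_S c N x y : abssum2 c (S N) x y = abssum2 c N x y + absrow c (S N) x y (S N).
Proof. unfold abssum2 at 1; fold abssum2. f_equal.
  simpl absrow. f_equal.
  match goal with |- ?F N = _ => assert (H : forall i, F i = absrow c (S N) x y i) end.
  { induction i. reflexivity. simpl. rewrite <- IHi. reflexivity. }
  apply H. Qed.

Lemma psum2_eq c N x y : psum2 c N x y = csum (fun k => hp c k x y) (S N).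
Proof. induction N. simpl. unfold hp; simpl. ring.
  rewrite psum2_S, IHN. reflexivity. Qed.

Lemma absrow_ge0 c N x y i : 0 <= absrow c N x y i.
Proof. induction i.
  simpl. apply Rmult_le_pos. apply Cmod_ge_0. apply pow_le, Cmod_ge_0.
  change (absrow c N x y (S i)) with (Cmod (c (S i) (N - S i)%nat) * Cmod x ^ S i * Cmod y ^ (N - S i) + absrow c N x y i).
  assert (0 <= Cmod (c (S i) (N - S i)%nat) * Cmod x ^ S i * Cmod y ^ (N - S i)).
  { apply Rmult_le_pos. apply Rmult_le_pos. apply Cmod_ge_0. apply pow_le, Cmod_ge_0. apply pow_le, Cmod_ge_0. }
  lra. Qed.

Lemma abssum2_ge0 c N x y : 0 <= abssum2 c N x y.
Proof. induction N. simpl. apply Cmod_ge_0. rewrite abssum2_S.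
  pose proof (absrow_ge0 c (S N) x y (S N)). lra. Qed.

Lemma Cmod_rowf c N x y i : Cmod (rowf c N x y i) <= absrow c N x y i.
Proof. induction i; simpl rowf; simpl absrow.
  rewrite Cmod_mult, Cmod_Cpow. lra.
  eapply Rle_trans. apply Cmod_triangle. rewrite !Cmod_mult, !Cmod_Cpow. lra. Qed.

Lemma Cmod_hp_le c N x y : Cmod (hp c N x y) <= abssum2 c N x y.
Proof. destruct N. unfold hp; simpl. rewrite Cmod_mult, Cmod_1. lra.
  rewrite abssum2_S. pose proof (abssum2_ge0 c N x y). pose proof (Cmod_rowf c (S N) x y (S N)).
  unfold hp. lra. Qed.

Lemma rowf_hom c N t x y i : (i <= N)%nat ->
  rowf c N (t * x) (t * y) i = (Cpow t N * rowf c N x y i)%C.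
Proof. induction i; intros Hi; simpl rowf.
  rewrite Cpow_mul_l. ring.
  rewrite IHi by lia. rewrite !Cpow_mul_l.
  replace (Cpow t N) with (Cpow t (S i + (N - S i))) by (f_equal; lia).
  rewrite Cpow_add. simpl Cpow. ring. Qed.

Lemma hp_hom c N t x y : hp c N (t * x) (t * y) = (Cpow t N * hp c N x y)%C.
Proof. apply rowf_hom. lia. Qed.

Lemma rowf_zero c M N x y i : order_at_least M c -> (N < M)%nat -> (i <= N)%nat -> rowf c N x y i = 0%C.
Proof. intros Ho HN. induction i; intros Hi; simpl rowf.
  rewrite Ho by lia. ring. rewrite IHi by lia. rewrite Ho by lia. ring. Qed.

Lemma hp_zero c M N x y : order_at_least M c -> (N < M)%nat -> hp c N x y = 0%C.
Proof. intros; eapply rowf_zero; eauto. Qed.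

Definition theta (K : nat) := 2 * PI / INR K.
Definition zeta (K : nat) : C := (cos (theta K), sin (theta K)).

Lemma Cpow_zeta K m : Cpow (zeta K) m = (cos (INR m * theta K), sin (INR m * theta K)).
Proof. induction m. simpl. rewrite Rmult_0_l, cos_0, sin_0. reflexivity.
  change (Cpow (zeta K) (S m)) with (zeta K * Cpow (zeta K) m)%C. rewrite IHm.
  rewrite S_INR. unfold zeta. apply injective_projections; simpl.
  replace ((INR m + 1) * theta K) with (theta K + INR m * theta K) by ring. rewrite cos_plus. ring.
  replace ((INR m + 1) * theta K) with (theta K + INR m * theta K) by ring. rewrite sin_plus. ring.
Qed.

Lemma Cmod_cs a : Cmod (cos a, sin a) = 1.
Proof. unfold Cmod. simpl fst; simpl snd. pose proof (sin2_cos2 a). unfold Rsqr in H.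
  replace (cos a ^ 2 + sin a ^ 2) with 1 by nra. apply sqrt_1. Qed.

Lemma Cmod_Cpow_zeta K m : Cmod (Cpow (zeta K) m) = 1.
Proof. rewrite Cpow_zeta. apply Cmod_cs. Qed.

Lemma zeta_K K : (1 <= K)%nat -> Cpow (zeta K) K = 1%C.
Proof. intros HK. rewrite Cpow_zeta. unfold theta.
  assert (0 < INR K) by (apply lt_0_INR; lia).
  replace (INR K * (2 * PI / INR K)) with (2 * PI) by (field; lra).
  rewrite cos_2PI, sin_2PI. reflexivity. Qed.

Lemma Cpow_one n : Cpow 1%C n = 1%C.
Proof. induction n; simpl. reflexivity. rewrite IHn. ring. Qed.

Lemma geom_sum w L : ((w - 1) * csum (fun u => Cpow w u) L = Cpow w L - 1)%C.
Proof. induction L; simpl. ring. rewrite Cmult_plus_distr_l, IHL. ring. Qed.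

Lemma root_sum_zero K m : (1 <= K)%nat -> (0 < m < 2 * K)%nat -> m <> K ->
  csum (fun u => Cpow (Cpow (zeta K) m) u) K = 0%C.
Proof.
  intros HK Hm HmK.
  set (w := Cpow (zeta K) m).
  assert (HwK : Cpow w K = 1%C).
  { unfold w. rewrite <- Cpow_mult, Nat.mul_comm, Cpow_mult, zeta_K by lia. apply Cpow_one. }
  assert (Hw1 : w <> 1%C).
  { unfold w. rewrite Cpow_zeta. intros E. apply (f_equal fst) in E. simpl in E.
    set (a := INR m * theta K / 2).
    replace (INR m * theta K) with (2 * a) in E by (unfold a; field).
    rewrite cos_2a_sin in E.
    assert (Hs : sin a = 0) by nra.
    assert (0 < INR K) by (apply lt_0_INR; lia).
    assert (Ha : a = PI * (INR m / INR K)) by (unfold a, theta; field; lra).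
    assert (0 < INR m) by (apply lt_0_INR; lia).
    assert (INR m < 2 * INR K) by (replace (2 * INR K) with (INR (2 * K)) by (rewrite mult_INR; reflexivity); apply lt_INR; lia).
    assert (Hne : INR m <> INR K) by (intro; apply HmK; apply INR_eq; auto).
    assert (0 < INR m / INR K) by (apply Rdiv_lt_0_compat; lra).
    assert (Hmk : INR m = (INR m / INR K) * INR K) by (field; lra).
    assert (INR m / INR K < 2) by nra.
    assert (INR m / INR K <> 1) by (intro E2; apply Hne; rewrite Hmk, E2; ring).
    pose proof PI_RGT_0.
    destruct (Rlt_or_le (INR m / INR K) 1).
    - assert (0 < sin a) by (apply sin_gt_0; rewrite Ha; nra). lra.
    - assert (sin a < 0) by (apply sin_lt_0; rewrite Ha; nra). lra. }
  pose proof (geom_sum w K) as G. rewrite HwK in G.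
  assert (G' : ((w - 1) * csum (fun u => Cpow w u) K = 0)%C) by (rewrite G; ring).
  assert (Hw0 : (w - 1)%C <> 0%C).
  { intro E. apply Hw1. replace w with ((w - 1) + 1)%C by ring. rewrite E. ring. }
  replace (csum (fun u => Cpow w u) K) with (/ (w - 1) * ((w - 1) * csum (fun u => Cpow w u) K))%C
    by (field; auto).
  rewrite G'. ring.
Qed.

Lemma root_sum_K K : (1 <= K)%nat -> csum (fun u => Cpow (Cpow (zeta K) K) u) K = RtoC (INR K).
Proof. intros HK. rewrite zeta_K by auto.
  clear HK. induction K; simpl csum. reflexivity. rewrite IHK, Cpow_one, S_INR.
  apply injective_projections; simpl; ring. Qed.

Lemma lim_eps (f : nat -> C) (l : C) : filterlim f eventually (locally l) ->
  forall eps, 0 < eps -> exists N0, forall N, (N0 <= N)%nat -> Cmod (f N - l) < eps.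
Proof.
intros H eps He.
assert (He2 : 0 < eps / 2) by lra.
destruct (proj1 (filterlim_locally f l) H (mkposreal _ He2)) as [N0 HN].
exists N0. intros N HN0. specialize (HN N HN0).
apply C_NormedModule_mixin_compat2 in HN. simpl in HN.
assert (sqrt 2 < 2). { rewrite <- (sqrt_square 2) at 2 by lra. apply sqrt_lt_1; lra. }
change (minus (f N) l) with (f N - l)%C in HN.
nra.
Qed.

Lemma Cmod_sub_ge a b : Cmod a - Cmod b <= Cmod (a - b).
Proof. pose proof (Cmod_triangle (a - b) b). replace (a - b + b)%C with a in H by ring. lra. Qed.

Lemma Cmod_sub_sym a b : Cmod (a - b) = Cmod (b - a).
Proof. replace (a - b)%C with (- (b - a))%C by ring. apply Cmod_opp. Qed.

Lemma csum_lim (f : nat -> nat -> C) (l : nat -> C) K :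
  (forall u, (u < K)%nat -> forall eps, 0 < eps -> exists N0, forall N, (N0 <= N)%nat -> Cmod (f u N - l u) < eps) ->
  forall eps, 0 < eps -> exists N0, forall N, (N0 <= N)%nat ->
     Cmod (csum (fun u => f u N) K - csum l K) <= INR K * eps.
Proof.
  intros H eps He. revert H. induction K; intros H.
  - exists 0%nat. intros. simpl csum. simpl INR.
    replace (RtoC 0 - RtoC 0)%C with (RtoC 0) by ring. rewrite Cmod_R, Rabs_R0. lra.
  - destruct IHK as [N1 H1]. intros; apply H; auto.
    destruct (H K (Nat.lt_succ_diag_r K) eps He) as [N2 H2].
    exists (Nat.max N1 N2). intros N HN. simpl csum. rewrite S_INR.
    replace (csum (fun u => f u N) K + f K N - (csum l K + l K))%C with
      ((csum (fun u => f u N) K - csum l K) + (f K N - l K))%C by ring.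
    eapply Rle_trans. apply Cmod_triangle.
    specialize (H1 N ltac:(lia)). specialize (H2 N ltac:(lia)). lra.
Qed.

Lemma rsum_scal a f n : rsum (fun k => a * f k) n = a * rsum f n.
Proof. induction n; simpl. ring. rewrite IHn. ring. Qed.

Lemma csum_delta n v L : (n < L)%nat -> csum (fun k => if (k =? n)%nat then v else 0%C) L = v.
Proof. induction L; intros H. lia. simpl csum.
  destruct (Nat.eq_dec n L).
  - subst. rewrite Nat.eqb_refl. 
    assert (csum (fun k => if (k =? L)%nat then v else 0%C) L = 0%C).
    { clear. assert (forall M, (M <= L)%nat -> csum (fun k => if (k =? L)%nat then v else 0%C) M = 0%C).
      { induction M; intros HM; simpl. reflexivity. rewrite IHM by lia.
        destruct (M =? L)%nat eqn:E. apply Nat.eqb_eq in E; lia. ring. }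
      apply H; lia. }
    rewrite H0. ring.
  - rewrite IHL by lia. destruct (L =? n)%nat eqn:E. apply Nat.eqb_eq in E; lia. ring.
Qed.

Lemma Cmod_RtoC_pos r : 0 <= r -> Cmod (RtoC r) = r.
Proof. intros; rewrite Cmod_R; apply Rabs_pos_eq; auto. Qed.

Lemma Cmod_G K m : Cmod (csum (fun u => Cpow (Cpow (zeta K) m) u) K) <= INR K.
Proof. eapply Rle_trans. apply Cmod_csum. rewrite <- (Rmult_1_r (INR K)), <- rsum_const.
  apply rsum_le. intros. rewrite <- Cpow_mult. rewrite Cmod_Cpow_zeta. lra. Qed.

Lemma csum_minus f g n : (csum f n - csum g n)%C = csum (fun k => f k - g k)%C n.
Proof. induction n; simpl. ring. rewrite <- IHn. ring. Qed.

Lemma Cmod_tri3 (v L a : C) : Cmod v <= Cmod L + Cmod (a - L) + Cmod (a - v).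
Proof. replace v with (L + (a - L) - (a - v))%C at 1 by ring.
  pose proof (Cmod_triangle (L + (a - L)) (- (a - v))). rewrite Cmod_opp in H.
  pose proof (Cmod_triangle L (a - L)). unfold Cminus at 1. lra. Qed.

Lemma Cmod_zero_diff (a : C) : Cmod (a - a) = 0.
Proof. replace (a - a)%C with (RtoC 0) by ring. rewrite Cmod_R. apply Rabs_R0. Qed.

Lemma cauchy_est c p Rad m0 n x0 y0 :
  0 < Rad -> is_power_series_on Rad c p -> (forall z, in_bidisc Rad z -> Cmod (p z) <= m0) ->
  Cmod x0 <= 1 -> Cmod y0 <= 1 ->
  Cmod (hp c n x0 y0) * (Rad / 2) ^ n <= m0.
Proof.
  intros HR Hps Hp Hx Hy.
  set (r := 3 * Rad / 4). set (r' := Rad / 2). set (q := 2 / 3).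
  assert (Hr : 0 < r) by (unfold r; lra). assert (Hr' : 0 < r') by (unfold r'; lra).
  pose proof (Cmod_ge_0 x0). pose proof (Cmod_ge_0 y0).
  destruct (Hps (RtoC r * x0, RtoC r * y0)%C) as [[Mb HMb] _].
  { split; simpl; rewrite Cmod_mult, Cmod_RtoC_pos by lra; unfold r; nra. }
  assert (HB : forall N, Cmod (hp c N x0 y0) * r ^ N <= Mb).
  { intro N. specialize (HMb N). simpl in HMb. pose proof (Cmod_hp_le c N (RtoC r * x0) (RtoC r * y0)) as H1.
    rewrite hp_hom, Cmod_mult, Cmod_Cpow, Cmod_RtoC_pos in H1 by lra. lra. }
  assert (HMb0 : 0 <= Mb).
  { specialize (HB 0%nat). pose proof (Cmod_ge_0 (hp c 0 x0 y0)). simpl in HB. lra. }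
  assert (Main : forall K, (n < K)%nat -> Cmod (hp c n x0 y0) * r' ^ n <= m0 + 3 * Mb * q ^ K).
  { intros K HK.
    assert (HK1 : (1 <= K)%nat) by lia.
    assert (HKpos : 0 < INR K) by (apply lt_0_INR; lia).
    set (W := fun u => Cpow (Cpow (zeta K) (K - n)) u).
    assert (HW : forall u, Cmod (W u) = 1).
    { intro u. unfold W. rewrite <- Cpow_mult. apply Cmod_Cpow_zeta. }
    set (t := fun u => (RtoC r' * Cpow (zeta K) u)%C).
    set (zu := fun u => ((t u * x0)%C, (t u * y0)%C)).
    assert (Hzu : forall u, in_bidisc Rad (zu u)).
    { intro u. unfold zu, t; split; simpl; rewrite !Cmod_mult, Cmod_Cpow_zeta, Cmod_RtoC_pos by lra; unfold r' in *; nra. }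
    set (Lim := csum (fun u => W u * p (zu u))%C K).
    assert (HL : Cmod Lim <= INR K * m0).
    { unfold Lim. eapply Rle_trans. apply Cmod_csum. rewrite <- rsum_const. apply rsum_le. intros u _.
      rewrite Cmod_mult, HW, Rmult_1_l. apply Hp, Hzu. }
    set (A := fun N => csum (fun u => W u * psum2 c N (fst (zu u)) (snd (zu u)))%C K).
    assert (HA : forall eps, 0 < eps -> exists N0, forall N, (N0 <= N)%nat -> Cmod (A N - Lim) <= INR K * eps).
    { apply (csum_lim (fun u N => W u * psum2 c N (fst (zu u)) (snd (zu u)))%C (fun u => W u * p (zu u))%C K).
      intros u Hu eps He. destruct (lim_eps _ _ (proj2 (Hps (zu u) (Hzu u))) eps He) as [N0 HN0].
      exists N0. intros N HN.
      replace (W u * psum2 c N (fst (zu u)) (snd (zu u)) - W u * p (zu u))%C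
        with (W u * (psum2 c N (fst (zu u)) (snd (zu u)) - p (zu u)))%C by ring.
      rewrite Cmod_mult, HW, Rmult_1_l. apply HN0; auto. }
    set (G := fun m => csum (fun u => Cpow (Cpow (zeta K) m) u) K).
    set (T := fun N' => (hp c N' x0 y0 * RtoC (r' ^ N') * G (K - n + N')%nat)%C).
    assert (HAT : forall N, A N = csum T (S N)).
    { intro N. unfold A.
      transitivity (csum (fun u => csum (fun N' => W u * (Cpow (t u) N' * hp c N' x0 y0))%C (S N)) K).
      { apply csum_ext. intros u _. unfold zu. simpl fst; simpl snd. rewrite psum2_eq. rewrite <- csum_scal.
        apply csum_ext. intros N' _. rewrite hp_hom. reflexivity. }
      rewrite csum_exch. apply csum_ext. intros N' _. unfold T, G. rewrite <- csum_scal. apply csum_ext. intros u _.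
      unfold W, t. rewrite Cpow_mul_l, Cpow_RtoC, <- !Cpow_mult.
      replace ((K - n + N') * u)%nat with ((K - n) * u + u * N')%nat by lia.
      rewrite Cpow_add. ring. }
    set (v := (hp c n x0 y0 * RtoC (r' ^ n) * RtoC (INR K))%C).
    assert (HTv : forall N, (K <= N)%nat -> Cmod (A N - v) <= INR K * (3 * Mb * q ^ K)).
    { intros N HN. rewrite HAT.
      replace v with (csum (fun k => if (k =? n)%nat then v else 0%C) (S N)) by (apply csum_delta; lia).
      rewrite csum_minus.
      eapply Rle_trans. apply Cmod_csum.
      apply Rle_trans with (rsum (fun N' => INR K * Mb * (if (K <=? N')%nat then q ^ N' else 0)) (S N)).
      { apply rsum_le. intros N' _. destruct (K <=? N')%nat eqn:E.
        - apply Nat.leb_le in E.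
          destruct (N' =? n)%nat eqn:E2. apply Nat.eqb_eq in E2; lia.
          replace (T N' - 0)%C with (T N') by ring.
          unfold T. rewrite !Cmod_mult, Cmod_RtoC_pos by (apply pow_le; lra).
          pose proof (Cmod_G K (K - n + N')) as HG. pose proof (HB N') as HBN.
          replace (r' ^ N') with (r ^ N' * q ^ N') by (rewrite <- Rpow_mult_distr; f_equal; unfold r, r', q; field).
          assert (0 <= q ^ N') by (apply pow_le; unfold q; lra).
          pose proof (Cmod_ge_0 (hp c N' x0 y0)). pose proof (Cmod_ge_0 (G (K - n + N')%nat)).
          assert (0 <= r ^ N') by (apply pow_le; lra).
          replace (Cmod (hp c N' x0 y0) * (r ^ N' * q ^ N') * Cmod (G (K - n + N')%nat))
            with ((Cmod (hp c N' x0 y0) * r ^ N') * (q ^ N' * Cmod (G (K - n + N')%nat))) by ring.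
          replace (INR K * Mb * q ^ N') with (Mb * (q ^ N' * INR K)) by ring.
          apply Rmult_le_compat; try nra. apply Rmult_le_compat_l; auto.
        - apply Nat.leb_nle in E.
          destruct (N' =? n)%nat eqn:E2.
          + apply Nat.eqb_eq in E2; subst N'. unfold T, v, G. replace (K - n + n)%nat with K by lia.
            rewrite root_sum_K by lia. rewrite Cmod_zero_diff. lra.
          + apply Nat.eqb_neq in E2. unfold T, G. rewrite root_sum_zero by lia.
            replace (hp c N' x0 y0 * RtoC (r' ^ N') * 0 - 0)%C with (RtoC 0) by ring.
            rewrite Cmod_R, Rabs_R0. lra. }
      rewrite rsum_scal. pose proof (geo_tail q K (S N) ltac:(unfold q; lra)).
      replace (q ^ K / (1 - q)) with (3 * q ^ K) in H1 by (unfold q; field).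
      assert (0 <= INR K * Mb) by nra. nra. }
    assert (Hv : Cmod v <= INR K * m0 + INR K * (3 * Mb * q ^ K)).
    { apply Rle_plus_epsilon. intros eps He.
      destruct (HA (eps / INR K)) as [N0 HN0]. apply Rdiv_lt_0_compat; lra.
      specialize (HN0 (Nat.max N0 K) ltac:(lia)). specialize (HTv (Nat.max N0 K) ltac:(lia)).
      pose proof (Cmod_tri3 v Lim (A (Nat.max N0 K))).
      replace (INR K * (eps / INR K)) with eps in HN0 by (field; lra). lra. }
    unfold v in Hv. rewrite !Cmod_mult, !Cmod_RtoC_pos in Hv by (try apply pow_le; lra).
    apply Rmult_le_reg_r with (INR K); auto. nra. }
  apply Rle_plus_epsilon. intros eps He.
  destruct (pow_lt_1_zero q ltac:(unfold q; rewrite Rabs_pos_eq; lra) (eps / (3 * Mb + 1))) as [K0 HK0].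
  apply Rdiv_lt_0_compat; lra.
  specialize (Main (Nat.max K0 (S n)) ltac:(lia)).
  specialize (HK0 (Nat.max K0 (S n)) ltac:(lia)).
  rewrite Rabs_pos_eq in HK0 by (apply pow_le; unfold q; lra).
  set (Q := q ^ Nat.max K0 (S n)) in *.
  assert (0 <= Q) by (apply pow_le; unfold q; lra).
  assert ((3 * Mb + 1) * Q < eps).
  { apply Rmult_lt_reg_r with (/ (3 * Mb + 1)). apply Rinv_0_lt_compat; lra.
    replace ((3 * Mb + 1) * Q * / (3 * Mb + 1)) with Q by (field; lra). exact HK0. }
  fold r'. nra.
Qed.

Lemma arith_bound s Rad m0 d : 0 < Rad -> 0 < m0 -> 0 < d ->
  d <= Rad ^ (2 * s + 1) / (2 ^ (6 * s + 6) * m0) ->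
  2 * m0 * (8 * d / Rad) ^ (2 * s + 1) <= d ^ (2 * s) / 4.
Proof.
  intros HR Hm Hd Hdb.
  set (M := (2 * s + 1)%nat).
  set (E := 8 ^ M).
  assert (H2 : 2 ^ (6 * s + 6) = 8 * E).
  { unfold E, M. replace (6 * s + 6)%nat with (3 * (2 * s + 1 + 1))%nat by lia.
    rewrite pow_mult, pow_add. replace (2 ^ 3) with 8 by ring. rewrite pow_1. ring. }
  assert (HRM : 0 < Rad ^ M) by (apply pow_lt; lra).
  assert (HE : 0 < E) by (apply pow_lt; lra).
  assert (Hk : d * (8 * E * m0) <= Rad ^ M).
  { rewrite H2 in Hdb. unfold M in *.
    apply Rmult_le_compat_r with (r := 8 * E * m0) in Hdb; [|nra].
    replace (Rad ^ (2 * s + 1) / (8 * E * m0) * (8 * E * m0)) with (Rad ^ (2 * s + 1)) in Hdb by (field; nra).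
    exact Hdb. }
  assert (HQ : (8 * d / Rad) ^ M = E * d ^ (2 * s) * d / Rad ^ M).
  { unfold Rdiv. rewrite !Rpow_mult_distr. unfold E, M. rewrite (pow_add d), pow_1, pow_inv. field. apply pow_nonzero. lra. }
  fold M. rewrite HQ.
  assert (0 < d ^ (2 * s)) by (apply pow_lt; lra).
  apply Rmult_le_reg_r with (Rad ^ M); auto.
  replace (2 * m0 * (E * d ^ (2 * s) * d / Rad ^ M) * Rad ^ M) with (d ^ (2 * s) * (d * (8 * E * m0)) / 4) by (field; lra).
  replace (d ^ (2 * s) / 4 * Rad ^ M) with (d ^ (2 * s) * Rad ^ M / 4) by field.
  apply Rmult_le_compat_r. lra. apply Rmult_le_compat_l; lra.
Qed.

Lemma p_small c p Rad m0 s d z :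
  (1 <= s)%nat -> 0 < Rad -> 0 < m0 ->
  order_at_least (2 * s + 1) c -> is_power_series_on Rad c p ->
  (forall z, in_bidisc Rad z -> Cmod (p z) <= m0) ->
  0 < d -> d <= Rad / 16 -> d <= Rad ^ (2 * s + 1) / (2 ^ (6 * s + 6) * m0) ->
  in_bidisc (4 * d) z -> Cmod (p z) <= d ^ (2 * s) / 4.
Proof.
  intros Hs HR Hm Ho Hps Hp Hd Hd16 Hdb Hz.
  set (M := (2 * s + 1)%nat). set (rho := 4 * d). set (Q := 8 * d / Rad).
  assert (HQ : 0 < Q <= 1/2). { unfold Q. split. apply Rdiv_lt_0_compat; lra.
    apply Rmult_le_reg_r with Rad; auto. unfold Rdiv. rewrite Rmult_assoc, Rinv_l by lra. lra. }
  destruct z as [xi eta]. destruct Hz as [Hxi Heta]. simpl in Hxi, Heta.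
  assert (HzR : in_bidisc Rad (xi, eta)) by (split; simpl; lra).
  assert (Hterm : forall N, Cmod (hp c N xi eta) <= m0 * (if (M <=? N)%nat then Q ^ N else 0)).
  { intro N. destruct (M <=? N)%nat eqn:E.
    - assert (Hrho : 0 < rho) by (unfold rho; lra).
      replace xi with (RtoC rho * (xi / RtoC rho))%C by (field; intro H0; apply (f_equal fst) in H0; simpl in H0; lra).
      replace eta with (RtoC rho * (eta / RtoC rho))%C by (field; intro H0; apply (f_equal fst) in H0; simpl in H0; lra).
      rewrite hp_hom, Cmod_mult, Cmod_Cpow, Cmod_RtoC_pos by lra.
      assert (Hrc : RtoC rho <> 0%C) by (intro H0; apply (f_equal fst) in H0; simpl in H0; lra).
      pose proof (cauchy_est c p Rad m0 N (xi / RtoC rho) (eta / RtoC rho) HR Hps Hp) as Hc.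
      rewrite !Cmod_div, Cmod_RtoC_pos in Hc by (auto; lra).
      assert (Hc' : Cmod (hp c N (xi / RtoC rho) (eta / RtoC rho)) * (Rad / 2) ^ N <= m0).
      { apply Hc. apply Rmult_le_reg_r with rho; auto. unfold Rdiv; rewrite Rmult_assoc, Rinv_l by lra. unfold rho; lra.
        apply Rmult_le_reg_r with rho; auto. unfold Rdiv; rewrite Rmult_assoc, Rinv_l by lra. unfold rho; lra. }
      replace (rho ^ N) with ((Rad / 2) ^ N * Q ^ N) by (rewrite <- Rpow_mult_distr; f_equal; unfold Q, rho; field; lra).
      assert (0 <= Q ^ N) by (apply pow_le; lra).
      pose proof (Cmod_ge_0 (hp c N (xi / RtoC rho) (eta / RtoC rho))).
      nra.
    - apply Nat.leb_nle in E. rewrite (hp_zero c M) by (auto; lia). rewrite Cmod_R, Rabs_R0. lra. }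
  assert (Hpart : forall N, Cmod (psum2 c N xi eta) <= 2 * m0 * Q ^ M).
  { intro N. rewrite psum2_eq. eapply Rle_trans. apply Cmod_csum.
    eapply Rle_trans. apply rsum_le. intros k _. apply Hterm.
    rewrite rsum_scal. pose proof (geo_tail Q M (S N) ltac:(lra)).
    assert (Q ^ M / (1 - Q) <= 2 * Q ^ M).
    { assert (0 < Q ^ M) by (apply pow_lt; lra).
      apply Rmult_le_reg_r with (1 - Q). lra. unfold Rdiv. rewrite Rmult_assoc, Rinv_l by lra. nra. }
    nra. }
  assert (Hfin : Cmod (p (xi, eta)) <= 2 * m0 * Q ^ M).
  { apply Rle_plus_epsilon. intros eps He.
    destruct (lim_eps _ _ (proj2 (Hps (xi, eta) HzR)) eps He) as [N0 HN0].
    specialize (HN0 N0 (le_n _)). specialize (Hpart N0). simpl in HN0.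
    pose proof (Cmod_sub_ge (p (xi, eta)) (psum2 c N0 xi eta)).
    rewrite Cmod_sub_sym in H. lra. }
  eapply Rle_trans. exact Hfin. apply arith_bound; lra.
Qed.

Lemma exp_le x y : x <= y -> exp x <= exp y.
Proof. intros H. destruct (Rle_lt_or_eq_dec _ _ H). left; apply exp_increasing; auto. subst; lra. Qed.

Lemma Cmod_cexp z : Cmod (cexp z) = exp (Re z).
Proof. unfold cexp, Cmod. simpl fst; simpl snd. pose proof (sin2_cos2 (Im z)). unfold Rsqr in H.
  pose proof (exp_pos (Re z)).
  replace ((exp (Re z) * cos (Im z)) ^ 2 + (exp (Re z) * sin (Im z)) ^ 2) with (exp (Re z) ^ 2) by nra.
  apply sqrt_pow2. lra. Qed.

Lemma cexp_opp z : (cexp z * cexp (- z) = 1)%C.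
Proof. unfold cexp, Re, Im. simpl. rewrite cos_neg, sin_neg.
  replace (- fst z) with (- (fst z)) by ring. 
  pose proof (exp_plus (fst z) (- fst z)). replace (fst z + - fst z) with 0 in H by ring. rewrite exp_0 in H.
  pose proof (sin2_cos2 (snd z)). unfold Rsqr in H0.
  apply injective_projections; simpl.
  - transitivity (exp (fst z) * exp (- fst z) * (sin (snd z) * sin (snd z) + cos (snd z) * cos (snd z))). ring.
    rewrite <- H, H0. ring.
  - ring. Qed.

Lemma Im_le_Cmod c : Im c <= Cmod c.
Proof. pose proof (Rmax_Cmod c). pose proof (Rmax_r (Rabs (fst c)) (Rabs (snd c))).
  pose proof (Rle_abs (snd c)). unfold Im. lra. Qed.
Lemma mIm_le_Cmod c : - Im c <= Cmod c.
Proof. pose proof (Rmax_Cmod c). pose proof (Rmax_r (Rabs (fst c)) (Rabs (snd c))).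
  pose proof (Rle_abs (- snd c)). rewrite Rabs_Ropp in H1. unfold Im. lra. Qed.

Lemma step alpha s p (z : C * C) e delta :
  0 <= delta <= 1/8 -> Cmod (p z) <= delta ->
  Cmod (fst z * snd z) ^ s <= e ->
  Cmod (fst (phi alpha s p z)) <= exp e / (1 - delta) * Cmod (fst z) /\
  Cmod (snd (phi alpha s p z)) <= exp e / (1 - delta) * Cmod (snd z) /\
  (fst (phi alpha s p z) * snd (phi alpha s p z) = fst z * snd z)%C /\
  (1 + p z)%C <> 0%C.
Proof.
  intros Hd Hp He.
  destruct z as [xi eta]. simpl fst in *; simpl snd in *.
  set (w := omega alpha s (xi * eta)%C).
  assert (Hw1 : - Im w <= e).
  { unfold w, omega. simpl Im. pose proof (mIm_le_Cmod (Cpow (xi * eta) s)). rewrite Cmod_Cpow in H.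
    unfold Im in *. simpl. lra. }
  assert (Hw2 : Im w <= e).
  { unfold w, omega. pose proof (Im_le_Cmod (Cpow (xi * eta) s)). rewrite Cmod_Cpow in H.
    unfold Im in *. simpl. lra. }
  assert (Hre1 : Re (Ci * w) = - Im w) by (unfold Re, Im; simpl; ring).
  assert (Hre2 : Re (- (Ci * w)) = Im w) by (unfold Re, Im; simpl; ring).
  assert (H1p : 1 - delta <= Cmod (1 + p (xi, eta))).
  { pose proof (Cmod_sub_ge 1 (- p (xi, eta))). rewrite Cmod_1, Cmod_opp in H.
    replace (1 - - p (xi, eta))%C with (1 + p (xi, eta))%C in H by ring. lra. }
  assert (H1p' : Cmod (1 + p (xi, eta)) <= 1 + delta).
  { pose proof (Cmod_triangle 1 (p (xi, eta))). rewrite Cmod_1 in H. lra. }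
  assert (Hnz : (1 + p (xi, eta))%C <> 0%C).
  { intro E. rewrite E, Cmod_0 in H1p. lra. }
  assert (Hee : 0 < exp e) by apply exp_pos.
  pose proof (Cmod_ge_0 xi). pose proof (Cmod_ge_0 eta).
  assert (Hinv : 1 + delta <= 1 / (1 - delta)).
  { apply Rmult_le_reg_r with (1 - delta). lra. field_simplify; nra. }
  unfold phi. simpl fst; simpl snd. fold w.
  split; [|split; [|split]].
  - rewrite !Cmod_mult, Cmod_cexp, Hre1.
    pose proof (exp_le _ _ Hw1).
    assert (Cmod (1 + p (xi, eta)) <= 1 / (1 - delta)) by lra.
    replace (exp e / (1 - delta) * Cmod xi) with (exp e * Cmod xi * (1 / (1 - delta))) by (field; lra).
    apply Rmult_le_compat. pose proof (exp_pos (- Im w)). nra. apply Cmod_ge_0.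
    apply Rmult_le_compat_r; lra. lra.
  - rewrite !Cmod_mult, Cmod_cexp, Hre2, Cmod_inv by auto.
    pose proof (exp_le _ _ Hw2).
    assert (/ Cmod (1 + p (xi, eta)) <= 1 / (1 - delta)).
    { unfold Rdiv. rewrite Rmult_1_l. apply Rinv_le_contravar; lra. }
    replace (exp e / (1 - delta) * Cmod eta) with (exp e * Cmod eta * (1 / (1 - delta))) by (field; lra).
    apply Rmult_le_compat. pose proof (exp_pos (Im w)). nra.
    left; apply Rinv_0_lt_compat; lra.
    apply Rmult_le_compat_r; lra. lra.
  - pose proof (cexp_opp (Ci * w)).
    transitivity ((cexp (Ci * w) * cexp (- (Ci * w))) * (xi * eta) * ((1 + p (xi, eta)) / (1 + p (xi, eta))))%C.
    field; auto. rewrite H1. field; auto.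
  - auto.
Qed.

Theorem lemma3p1 (s : nat) (alpha Rad m0 : R) (c : nat -> nat -> C)
  (p : C * C -> C) (n : nat) :
  (1 <= s)%nat -> 0 < Rad -> Rad < 1 -> 0 < m0 ->
  order_at_least (2 * s + 1) c ->
  is_power_series_on Rad c p ->
  (forall z, in_bidisc Rad z -> Cmod (p z) <= m0) ->
  (1 <= n)%nat ->
  forall k : nat, (1 <= k <= n)%nat ->
  forall z : C * C, in_bidisc (d0 s Rad m0 n) z ->
    (forall j : nat, (j < k)%nat ->
       phi_defined_at Rad p (Nat.iter j (phi alpha s p) z)) /\
    in_bidisc (4 * d0 s Rad m0 n) (Nat.iter k (phi alpha s p) z).
Proof.
  intros Hs HR HR1 Hm Ho Hps Hp Hn k Hk z Hz.
  set (d := d0 s Rad m0 n) in *.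
  assert (Hn0 : 0 < INR n) by (apply lt_0_INR; lia).
  assert (Hs0 : 0 < INR s) by (apply lt_0_INR; lia).
  set (P := Rpower (/ (2 * INR n)) (/ (2 * INR s))).
  assert (HP : 0 < P) by (unfold P, Rpower; apply exp_pos).
  assert (Hd1 : d <= Rad ^ (2 * s + 1) / (2 ^ (6 * s + 6) * m0)).
  { unfold d, d0. eapply Rle_trans; [apply Rmin_l|apply Rmin_l]. }
  assert (Hd2 : d <= P).
  { unfold d, d0. eapply Rle_trans; [apply Rmin_l|apply Rmin_r]. }
  assert (Hd3 : d <= Rad / 16) by (unfold d, d0; apply Rmin_r).
  assert (Hdpos : 0 < d).
  { unfold d, d0. apply Rmin_glb_lt; [apply Rmin_glb_lt|]; try lra.
    apply Rdiv_lt_0_compat. apply pow_lt; lra. apply Rmult_lt_0_compat; auto. apply pow_lt; lra.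
    unfold Rpower; apply exp_pos. }
  set (e := d ^ (2 * s)).
  set (delta := e / 4).
  assert (He : e <= / (2 * INR n)).
  { unfold e. eapply Rle_trans. apply pow_incr. split; [lra|exact Hd2].
    unfold P. rewrite <- Rpower_pow by (unfold Rpower; apply exp_pos).
    rewrite Rpower_mult. rewrite mult_INR. simpl (INR 2).
    replace (/ (2 * INR s) * ((1 + 1) * INR s)) with 1 by (field; lra).
    rewrite Rpower_1. lra. apply Rinv_0_lt_compat; lra. }
  assert (He0 : 0 <= e) by (apply pow_le; lra).
  assert (Hne : INR n * e <= 1 / 2).
  { apply Rmult_le_compat_l with (r := INR n) in He; [|lra].
    replace (INR n * / (2 * INR n)) with (1/2) in He by (field; lra). lra. }
  assert (Hn1 : 1 <= INR n) by (replace 1 with (INR 1) by reflexivity; apply le_INR; lia).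
  assert (Hdel : 0 <= delta <= 1 / 8) by (unfold delta; split; nra).
  assert (Hnd : INR n * delta <= 1 / 8) by (unfold delta; lra).
  assert (Hpz : forall z', in_bidisc (4 * d) z' -> Cmod (p z') <= delta).
  { intros z' Hz'. unfold delta, e. apply (p_small c p Rad m0 s d z'); auto. }
  assert (Hexp : exp (1 / 2) < 2).
  { pose proof (exp_plus (1/2) (1/2)). replace (1/2 + 1/2) with 1 in H by field.
    pose proof exp_le_3. pose proof (exp_pos (1/2)). nra. }
  set (Bf := fun j : nat => exp (INR j * e) / (1 - INR j * delta)).
  assert (HBf : forall j, (j <= n)%nat -> 0 < Bf j <= 16 / 7).
  { intros j Hj. assert (INR j <= INR n) by (apply le_INR; auto).
    assert (0 <= INR j) by apply pos_INR.
    assert (INR j * delta <= 1/8) by nra.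
    assert (INR j * e <= 1/2) by nra.
    pose proof (exp_le _ _ H2). pose proof (exp_pos (INR j * e)).
    unfold Bf. split. apply Rdiv_lt_0_compat; lra.
    apply Rmult_le_reg_r with (1 - INR j * delta). lra.
    unfold Rdiv at 1. rewrite Rmult_assoc, Rinv_l by lra. nra. }
  set (f := phi alpha s p).
  destruct z as [xi eta]. destruct Hz as [Hxi Heta]. simpl fst in *; simpl snd in *.
  assert (Hprod : Cmod (xi * eta) ^ s <= e).
  { unfold e. rewrite Cmod_mult, pow_mult. apply pow_incr. pose proof (Cmod_ge_0 xi). pose proof (Cmod_ge_0 eta).
    split. nra. simpl. nra. }
  assert (Inv : forall j, (j <= n)%nat ->
     Cmod (fst (Nat.iter j f (xi, eta))) <= Cmod xi * Bf j /\
     Cmod (snd (Nat.iter j f (xi, eta))) <= Cmod eta * Bf j /\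
     (fst (Nat.iter j f (xi, eta)) * snd (Nat.iter j f (xi, eta)) = xi * eta)%C).
  { induction j; intros Hj.
    - unfold Bf. simpl. rewrite Rmult_0_l, exp_0. replace (1 - 0 * delta) with 1 by ring.
      split; [|split]; try lra. reflexivity.
    - destruct (IHj ltac:(lia)) as [I1 [I2 I3]].
      destruct (HBf j ltac:(lia)) as [B0 B1].
      pose proof (Cmod_ge_0 xi). pose proof (Cmod_ge_0 eta).
      assert (Hin : in_bidisc (4 * d) (Nat.iter j f (xi, eta))) by (split; nra).
      destruct (step alpha s p (Nat.iter j f (xi, eta)) e delta Hdel (Hpz _ Hin)) as [S1 [S2 [S3 _]]].
      { rewrite I3. auto. }
      change (Nat.iter (S j) f (xi, eta)) with (f (Nat.iter j f (xi, eta))). unfold f in *.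
      assert (HBS : exp e / (1 - delta) * Bf j <= Bf (S j)).
      { unfold Bf. rewrite S_INR.
        assert (INR (S j) <= INR n) by (apply le_INR; auto). rewrite S_INR in H1.
        assert (0 <= INR j) by apply pos_INR.
        assert (INR j * delta + delta <= 1/8) by nra.
        replace ((INR j + 1) * e) with (e + INR j * e) by ring. rewrite exp_plus.
        pose proof (exp_pos e). pose proof (exp_pos (INR j * e)).
        replace (exp e / (1 - delta) * (exp (INR j * e) / (1 - INR j * delta)))
          with (exp e * exp (INR j * e) / ((1 - delta) * (1 - INR j * delta))) by (field; lra).
        apply Rmult_le_compat_l. nra.
        apply Rinv_le_contravar. lra. nra. }
      assert (0 <= exp e / (1 - delta)) by (apply Rdiv_le_0_compat; [left; apply exp_pos | lra]).
      split; [|split].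
      + eapply Rle_trans. exact S1. eapply Rle_trans. apply Rmult_le_compat_l. auto. exact I1. nra.
      + eapply Rle_trans. exact S2. eapply Rle_trans. apply Rmult_le_compat_l. auto. exact I2. nra.
      + rewrite S3. exact I3. }
  assert (Hin : forall j, (j <= n)%nat -> in_bidisc (4 * d) (Nat.iter j f (xi, eta))).
  { intros j Hj. destruct (Inv j Hj) as [I1 [I2 _]]. destruct (HBf j Hj).
    pose proof (Cmod_ge_0 xi). pose proof (Cmod_ge_0 eta). split; nra. }
  split.
  - intros j Hj. pose proof (Hin j ltac:(lia)) as Hj'. split.
    + destruct Hj'. split; lra.
    + destruct (step alpha s p (Nat.iter j f (xi, eta)) e delta Hdel (Hpz _ Hj')) as [_ [_ [_ S4]]].
      { destruct (Inv j ltac:(lia)) as [_ [_ I3]]. rewrite I3. auto. }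
      exact S4.
  - apply Hin. lia.
Qed.
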